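(* Assume $H_0$ satisfies TQO-2. Let $A\in\mathcal{S}(r)$ be any square with $r\le L^*$ and let $O_A$ be any operator acting on $A$ such that $O_AP=0$. Let $B\in\mathcal{S}(r+2)$ be the square that contains $A$ and all nearest neighbors of $A$. Then $O_AP_B=0$.
   Context: Let $\Lambda=\mathbb{Z}_L\times\mathbb{Z}_L$ (periodic boundary conditions), each site $u$ carrying a finite-dimensional Hilbert space $\mathcal{H}_u$, $\mathcal{H}=\bigotimes_u\mathcal{H}_u$. For $r\ge1$, $\mathcal{S}(r)$ is the set of all $r\times r$ square blocks of sites. An operator acts on $A$ if it is the identity outside $A$. $H_0=\sum_{A\in\mathcal{S}(2)}G_A$ with each $G_A$ acting on $A$, the $G_A$ pairwise commuting, $G_A\ge0$, $G_A^2\ge G_A$, and frustration-free: the ground subspace $P=\{\psi:G_A\psi=0\ \forall A\in\mathcal{S}(2)\}$ is nonzero; $P$ also denotes its orthogonal projector. $P_A$ is the projector onto the kernel of $G_A$, and for a square $B$, $P_B=\prod_{A\in\mathcal{S}(2),A\subseteq B}P_A$. There is a constant $c>0$ and an integer $L^*\ge cL$. TQO-2: for every square $A\in\mathcal{S}(r)$, $r\le L^*$, with $B\in\mathcal{S}(r+2)$ the square containing $A$ and all its nearest neighbors, the operators $\mathrm{Tr}_{\Lambda\setminus A}(P)$ and $\mathrm{Tr}_{\Lambda\setminus A}(P_B)$ have the same kernel. *)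

(* Defs.v *)
From HB Require Import structures.
From mathcomp Require Import all_boot all_order all_algebra.
Set Implicit Arguments.
Unset Strict Implicit.
Unset Printing Implicit Defensive.
Import Order.TTheory GRing.Theory Num.Theory.
Local Open Scope ring_scope.

Definition site (L : nat) : finType := ('I_L * 'I_L)%type.

Definition block (L : nat) (a1 a2 r : nat) : {set site L} :=
  [set u : site L | [exists i : 'I_r, exists j : 'I_r,
      (nat_of_ord u.1 == (a1 + i) %% L)%N && (nat_of_ord u.2 == (a2 + j) %% L)%N]].

Definition squares (L r : nat) : {set {set site L}} :=
  [set block L (nat_of_ord a.1) (nat_of_ord a.2) r | a : site L].

(* the (r+2) x (r+2) square containing block a r and all its nearest
   neighbours: corner shifted by -1 (mod L) *)
Definition nbhd_block (L : nat) (a1 a2 r : nat) : {set site L} :=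
  block L (a1 + L - 1) (a2 + L - 1) r.+2.

Section Ops.
Variables (C : numClosedFieldType) (L : nat) (d : site L -> nat).

(* product basis of H = (x)_u H_u, dim H_u = d u *)
Definition cfg : finType := {dffun forall u : site L, 'I_(d u)}.

(* product basis of (x)_{u in A} H_u *)
Definition cfgOn (A : {set site L}) : finType :=
  {dffun forall u : {u : site L | u \in A}, 'I_(d (sval u))}.

Definition restrict (A : {set site L}) (x : cfg) : cfgOn A :=
  finfun (fun u : {u : site L | u \in A} => x (sval u)).

Definition agree_out (A : {set site L}) (x y : cfg) : bool :=
  [forall u : site L, (u \notin A) ==> (x u == y u)].

(* operators on H, resp. on (x)_{u in A} H_u, as matrices in the product basis *)
Definition opH := 'M[C]_(#|{: cfg}|).
Definition opA (A : {set site L}) := 'M[C]_(#|{: cfgOn A}|).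
Definition vecH := 'cV[C]_(#|{: cfg}|).

Definition ent (M : opH) (x y : cfg) : C := M (enum_rank x) (enum_rank y).
Definition entA (A : {set site L}) (M : opA A) (a b : cfgOn A) : C :=
  M (enum_rank a) (enum_rank b).

(* O acts on A: O = o (x) Id_{Lambda \ A} for some operator o on A *)
Definition acts_on (A : {set site L}) (O : opH) : Prop :=
  exists o : opA A, forall x y : cfg,
    ent O x y = if agree_out A x y then entA o (restrict A x) (restrict A y)
                else 0.

(* partial trace Tr_{Lambda \ A} *)
Definition ptrace (A : {set site L}) (M : opH) : opA A :=
  \matrix_(i, j) \sum_(x : cfg | restrict A x == enum_val i)
                   \sum_(y : cfg | (restrict A y == enum_val j) && agree_out A x y)
                      ent M x y.

End Ops.

Definition adj (C : numClosedFieldType) (m n : nat) (M : 'M[C]_(m, n)) : 'M[C]_(n, m) :=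
  (map_mx Num.conj M)^T.

Definition psd (C : numClosedFieldType) (n : nat) (M : 'M[C]_n) : Prop :=
  forall v : 'cV[C]_n, 0 <= (adj v *m M *m v) ord0 ord0.

Definition orth_proj_onto (C : numClosedFieldType) (n : nat) (Q : 'M[C]_n)
    (S : 'cV[C]_n -> Prop) : Prop :=
  [/\ Q *m Q = Q, adj Q = Q & forall v : 'cV[C]_n, Q *m v = v <-> S v].

Definition same_kernel (C : numClosedFieldType) (n : nat) (X Y : 'M[C]_n) : Prop :=
  forall v : 'cV[C]_n, X *m v = 0 <-> Y *m v = 0.

(* P_B = product of P_A over A in S(2), A subset of B (the P_A commute) *)
Definition PB (C : numClosedFieldType) (L : nat) (d : site L -> nat)
    (PA : {set site L} -> opH C d) (B : {set site L}) : opH C d :=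
  \big[@mulmx C _ _ _ / 1%:M]_(A in squares L 2 | A \subset B) PA A.

(* Standing assumptions on H_0 = sum_{A in S(2)} G_A, with P the ground-space
   projector and PA A the projector onto ker G_A. *)
Definition standing_assumptions (C : numClosedFieldType) (L : nat)
    (d : site L -> nat) (G PA : {set site L} -> opH C d) (P : opH C d) : Prop :=
  (forall A, A \in squares L 2 -> acts_on A (G A)) /\
  (forall A A', A \in squares L 2 -> A' \in squares L 2 ->
                G A *m G A' = G A' *m G A) /\
  (forall A, A \in squares L 2 -> psd (G A)) /\
  (forall A, A \in squares L 2 -> psd (G A *m G A - G A)) /\
  (forall A, A \in squares L 2 ->
             orth_proj_onto (PA A) (fun v => G A *m v = 0)) /\
  orth_proj_onto P (fun v => forall A, A \in squares L 2 -> G A *m v = 0) /\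
  P != 0.

Definition TQO2 (C : numClosedFieldType) (L : nat) (d : site L -> nat)
    (PA : {set site L} -> opH C d) (P : opH C d) (Lstar : nat) : Prop :=
  forall (r : nat) (a : site L), (1 <= r <= Lstar)%N ->
    same_kernel (ptrace (block L a.1 a.2 r) P)
                (ptrace (block L a.1 a.2 r) (PB PA (nbhd_block L a.1 a.2 r))).

(* Main.v *)
Require Import Defs.
From HB Require Import structures.
From mathcomp Require Import all_boot all_order all_algebra.
From mathcomp Require Import ring.
Import Order.TTheory GRing.Theory Num.Theory.
Local Open Scope ring_scope.
Set Implicit Arguments.
Unset Strict Implicit.

Section PT.
Variables (C : numClosedFieldType) (L : nat) (d : site L -> nat).
Local Notation cfg := (cfg d).
Local Notation opH := (opH C d).

Lemma entM (M N : opH) x y : ent (M *m N) x y = \sum_z ent M x z * ent N z y.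
Proof.
rewrite /ent mxE (reindex (fun i : 'I_#|{: cfg}| => enum_val i)) /=; last first.
  by exists (@enum_rank cfg) => i _; rewrite ?enum_valK ?enum_rankK.
by apply: eq_bigr => k _; rewrite enum_valK.
Qed.

Lemma opH_ext (M N : opH) : (forall x y, ent M x y = ent N x y) -> M = N.
Proof.
move=> H; apply/matrixP => i j; have := H (enum_val i) (enum_val j).
by rewrite /ent !enum_valK.
Qed.

Lemma opA_ext A (M N : opA C d A) : (forall x y, entA M x y = entA N x y) -> M = N.
Proof.
move=> H; apply/matrixP => i j; have := H (enum_val i) (enum_val j).
by rewrite /entA !enum_valK.
Qed.

Lemma entA_mul A (M N : opA C d A) a b :
  entA (M *m N) a b = \sum_c entA M a c * entA N c b.
Proof.
rewrite /entA mxE (reindex (fun i : 'I_#|{: cfgOn d A}| => enum_val i)) /=; last first.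
  by exists (@enum_rank (cfgOn d A)) => i _; rewrite ?enum_valK ?enum_rankK.
by apply: eq_bigr => k _; rewrite enum_valK.
Qed.

Lemma entA_pt A (M : opH) a b :
  entA (ptrace A M) a b =
  \sum_(x : cfg | restrict A x == a)
     \sum_(y : cfg | (restrict A y == b) && agree_out A x y) ent M x y.
Proof. by rewrite /entA mxE !enum_rankK. Qed.

Lemma agree_sym A (x y : cfg) : agree_out A x y = agree_out A y x.
Proof.
by apply/forallP/forallP => H u; apply/implyP => uA;
  rewrite eq_sym; move/implyP: (H u); apply.
Qed.

Lemma agree_trans A (x y z : cfg) : agree_out A x y -> agree_out A y z -> agree_out A x z.
Proof.
move=> /forallP H1 /forallP H2; apply/forallP => u; apply/implyP => uA.
by rewrite (eqP (implyP (H1 u) uA)) (implyP (H2 u) uA).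
Qed.

Lemma agree_refl A (x : cfg) : agree_out A x x.
Proof. by apply/forallP => u; apply/implyP. Qed.

Lemma agree_restrict A (x y : cfg) :
  agree_out A x y -> restrict A x = restrict A y -> x = y.
Proof.
move=> /forallP H1 H2; apply/ffunP => u; case: (boolP (u \in A)) => uA.
  by have := congr1 (fun f : cfgOn d A => f (exist _ u uA)) H2; rewrite !ffunE.
by rewrite (eqP (implyP (H1 u) uA)).
Qed.

Definition glue_at A (a : cfgOn d A) (z : cfg) (u : site L) : 'I_(d u) :=
  (if u \in A as b return ((u \in A) = b -> 'I_(d u))
   then fun h => a (exist _ u h) else fun _ => z u) (erefl _).

Definition glue A (a : cfgOn d A) (z : cfg) : cfg := [ffun u => glue_at a z u].

Lemma glue_restrict A a z : restrict A (glue (A := A) a z) = a.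
Proof.
apply/ffunP => -[u uA]; rewrite !ffunE /glue_at /=.
move: (erefl (u \in A)); rewrite {2 3}uA => e.
by rewrite (bool_irrelevance e uA).
Qed.

Lemma glue_agree A a z : agree_out A (glue (A := A) a z) z.
Proof.
apply/forallP => u; apply/implyP => uA; rewrite ffunE /glue_at /=.
move: (erefl (u \in A)); rewrite {2 3}(negbTE uA) => e //.
Qed.

Lemma glue_uniq A a z (x : cfg) :
  (restrict A x == a) && agree_out A x z = (x == glue a z).
Proof.
apply/idP/eqP.
  case/andP => /eqP rx ax; apply: (@agree_restrict A); last by rewrite glue_restrict.
  by apply: agree_trans ax _; rewrite agree_sym glue_agree.
by move=> ->; rewrite glue_restrict eqxx glue_agree.
Qed.


Lemma pt_mull A (O M : opH) (o : opA C d A) :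
  (forall x y : cfg, ent O x y = if agree_out A x y then entA o (restrict A x) (restrict A y) else 0) ->
  ptrace A (O *m M) = o *m ptrace A M.
Proof.
move=> Ho; apply: opA_ext => a b; rewrite entA_pt entA_mul.
transitivity (\sum_(z : cfg) \sum_(y : cfg | (restrict A y == b) && agree_out A z y)
                 entA o a (restrict A z) * ent M z y); last first.
  symmetry; rewrite (partition_big (restrict A) predT) //=.
  apply: eq_bigr => c _; rewrite entA_pt mulr_sumr; apply: eq_bigr => z /eqP ->.
  by rewrite mulr_sumr.
transitivity (\sum_(x : cfg | restrict A x == a) \sum_(y : cfg) \sum_(z : cfg)
   (if agree_out A x z then
      (if (restrict A y == b) && agree_out A x y then entA o a (restrict A z) * ent M z y else 0) else 0)).
  apply: eq_bigr => x /eqP rx; rewrite big_mkcond /=; apply: eq_bigr => y _.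
  case: ifP => hy; last by rewrite big1 // => z _; case: ifP.
  rewrite entM; apply: eq_bigr => z _; rewrite Ho rx.
  by case: ifP => _; rewrite ?mul0r.
rewrite exchange_big /=.
rewrite (eq_bigr _ (fun y _ => exchange_big _ _ _ _ _ _)) /= exchange_big /=.
apply: eq_bigr => z _; rewrite [RHS]big_mkcond; apply: eq_bigr => y _ /=.
rewrite -big_mkcondr /= (big_pred1 (glue a z)); last by move=> x; rewrite /= glue_uniq.
have -> : agree_out A (glue a z) y = agree_out A z y.
  apply/idP/idP => h; last exact: agree_trans (glue_agree _ _) h.
  by apply: agree_trans h; rewrite agree_sym glue_agree.
by [].
Qed.


Lemma adjK m n (M : 'M[C]_(m, n)) : adj (adj M) = M.
Proof. by apply/matrixP => i j; rewrite /adj !mxE conjCK. Qed.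

Lemma adj_mul m n p (M : 'M[C]_(m, n)) (N : 'M[C]_(n, p)) :
  adj (M *m N) = adj N *m adj M.
Proof. by rewrite /adj map_mxM trmx_mul. Qed.

Lemma adj0 m n : adj (0 : 'M[C]_(m, n)) = 0.
Proof. by apply/matrixP => i j; rewrite /adj !mxE rmorph0. Qed.

Lemma ent_adj (M : opH) x y : ent (adj M) x y = (ent M y x)^*.
Proof. by rewrite /ent /adj !mxE. Qed.

Lemma entA_adj A (M : opA C d A) x y : entA (adj M) x y = (entA M y x)^*.
Proof. by rewrite /entA /adj !mxE. Qed.

Lemma pt_adj A (M : opH) : ptrace A (adj M) = adj (ptrace A M).
Proof.
apply: opA_ext => a b; rewrite entA_adj !entA_pt rmorph_sum.
under [RHS]eq_bigr do rewrite rmorph_sum.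
rewrite [RHS](exchange_big_dep (fun y : cfg => restrict A y == a)) /=; last first.
  by move=> i j _ /andP[].
apply: eq_bigr => y ry; apply: eq_big => x.
  by rewrite ry agree_sym.
by rewrite ent_adj.
Qed.

Lemma acts_adj A (O : opH) (o : opA C d A) :
  (forall x y : cfg, ent O x y = if agree_out A x y then entA o (restrict A x) (restrict A y) else 0) ->
  (forall x y : cfg, ent (adj O) x y = if agree_out A x y then entA (adj o) (restrict A x) (restrict A y) else 0).
Proof.
move=> Ho x y; rewrite ent_adj Ho agree_sym; case: ifP => _; last by rewrite rmorph0.
by rewrite entA_adj.
Qed.

Lemma pt_mulr A (O M : opH) (o : opA C d A) :
  (forall x y : cfg, ent O x y = if agree_out A x y then entA o (restrict A x) (restrict A y) else 0) ->
  ptrace A (M *m adj O) = ptrace A M *m adj o.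
Proof.
move=> Ho; rewrite -[LHS]adjK -pt_adj adj_mul adjK (pt_mull _ Ho) adj_mul pt_adj.
by rewrite adjK.
Qed.

Lemma pt_XX A (X : opH) : ptrace A (X *m adj X) = 0 -> X = 0.
Proof.
move=> H; apply: opH_ext => x z.
have := congr1 (fun N => entA N (restrict A x) (restrict A x)) H.
rewrite /= entA_pt /entA mxE.
have E : forall x' : cfg, restrict A x' == restrict A x ->
   \sum_(y : cfg | (restrict A y == restrict A x) && agree_out A x' y) ent (X *m adj X) x' y
   = \sum_w `|ent X x' w| ^+ 2.
  move=> x' /eqP rx'; rewrite (big_pred1 x'); last first.
    move=> y /=; apply/idP/eqP.
      by case/andP => /eqP h ag; apply: esym; apply: agree_restrict ag _; rewrite h rx'.
    by move=> ->; rewrite rx' eqxx agree_refl.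
  by rewrite entM; apply: eq_bigr => w _; rewrite ent_adj normCK.
rewrite (eq_bigr _ E) => /eqP; rewrite psumr_eq0; last by move=> i _; apply: sumr_ge0 => w _; apply: exprn_ge0.
move=> /allP /(_ x) /=; rewrite mem_index_enum eqxx => /(_ isT) /implyP /(_ isT).
rewrite psumr_eq0; last by move=> w _; apply: exprn_ge0.
move=> /allP /(_ z) /=; rewrite mem_index_enum => /(_ isT).
by rewrite sqrf_eq0 normr_eq0 /ent mxE => /eqP.
Qed.

Lemma pt0 A : ptrace A (0 : opH) = 0.
Proof.
apply: opA_ext => a b; rewrite entA_pt /entA mxE big1 // => x _; rewrite big1 // => y _.
by rewrite /ent mxE.
Qed.
End PT.
Section Herm.
Variable C : numClosedFieldType.

Lemma adjD m n (M N : 'M[C]_(m, n)) : adj (M + N) = adj M + adj N.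
Proof. by apply/matrixP => i j; rewrite /adj !mxE rmorphD. Qed.
Lemma adjZ m n (c : C) (M : 'M[C]_(m, n)) : adj (c *: M) = c^* *: adj M.
Proof. by apply/matrixP => i j; rewrite /adj !mxE rmorphM. Qed.

Lemma psd_herm n (M : 'M[C]_n) : psd M -> adj M = M.
Proof.
move=> H.
pose B (u w : 'cV[C]_n) := (adj u *m M *m w) ord0 ord0.
have BDl u1 u2 w : B (u1 + u2) w = B u1 w + B u2 w.
  by rewrite /B adjD !mulmxDl mxE.
have BDr u w1 w2 : B u (w1 + w2) = B u w1 + B u w2.
  by rewrite /B mulmxDr mxE.
have BZl c u w : B (c *: u) w = c^* * B u w.
  by rewrite /B adjZ -!scalemxAl mxE.
have BZr c u w : B u (c *: w) = c * B u w.
  by rewrite /B -scalemxAr mxE.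
have Be i j : B (delta_mx i 0) (delta_mx j 0) = M i j.
  rewrite /B; have -> : adj (delta_mx i 0 : 'cV[C]_n) = delta_mx 0 i.
    by apply/matrixP => a b; rewrite /adj !mxE rmorph_nat andbC.
  by rewrite -rowE -colE !mxE.
have Rq v : (B v v)^* = B v v by apply: geC0_conj; apply: H.
apply/matrixP => i j; rewrite /adj !mxE.
set e := fun k => (delta_mx k 0 : 'cV[C]_n).
have h1 := Rq (e i + e j).
have h2 := Rq (e i + 'i *: e j).
rewrite !(BDl, BDr, BZl, BZr) !Be in h1 h2.
have hii := Rq (e i); have hjj := Rq (e j); rewrite !Be in hii hjj.
rewrite !rmorphD !rmorphM /= !conjCK conjCi hii hjj in h1 h2.
move: h1 h2; set a := M i i; set b := M j j; set g := M i j; set dd := M j i.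
move=> h1 h2.
have E : (dd^* - g) * 2 = ((a + g^* + (dd^* + b)) - (a + g + (dd + b)))
   - 'i * ((a + - 'i * g^* + ('i * dd^* + 'i * (- 'i * b))) -
      (a + 'i * g + (- 'i * dd + - 'i * ('i * b))))
   + ('i ^+ 2 + 1) * (dd^* - g^* - g + dd) by ring.
move: E; rewrite h1 h2 !subrr sqrCi addNr mul0r mulr0 subr0 addr0.
by move/eqP; rewrite mulf_eq0 pnatr_eq0 orbF subr_eq0 => /eqP.
Qed.

Lemma mx_colP n (X Y : 'M[C]_n) : (forall v : 'cV[C]_n, X *m v = Y *m v) -> X = Y.
Proof.
move=> H; apply/matrixP => i j; have := congr1 (fun N : 'cV[C]_n => N i 0) (H (delta_mx j 0)).
by rewrite -!colE !mxE.
Qed.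

Lemma proj_fix n (Q : 'M[C]_n) S v : orth_proj_onto Q S -> S v -> Q *m v = v.
Proof. by case=> _ _ h /h. Qed.

Lemma proj_in n (Q : 'M[C]_n) S v : orth_proj_onto Q S -> S (Q *m v).
Proof. by case=> qq _ h; apply/h; rewrite mulmxA qq. Qed.

Lemma proj_adj n (Q : 'M[C]_n) S : orth_proj_onto Q S -> adj Q = Q.
Proof. by case. Qed.

Lemma comm_pres n (Q G : 'M[C]_n) S : orth_proj_onto Q S -> adj G = G ->
  (forall v, S v -> S (G *m v)) -> Q *m G = G *m Q.
Proof.
move=> hQ hG hS.
have E : Q *m G *m Q = G *m Q.
  apply: mx_colP => v; rewrite -!mulmxA.
  by apply: (proj_fix hQ); apply: hS; apply: (proj_in _ hQ).
have := congr1 (@adj C n n) E; rewrite !adj_mul hG (proj_adj hQ) mulmxA => h; rewrite -[in LHS]h.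
by rewrite E.
Qed.

Lemma mx_kernel n (X Y N : 'M[C]_n) : same_kernel X Y -> X *m N = 0 -> Y *m N = 0.
Proof.
move=> SK H; apply/matrixP => i j.
have : X *m (N *m (delta_mx j 0 : 'cV[C]_n)) = 0 by rewrite mulmxA H mul0mx.
move/SK => /matrixP /(_ i 0); rewrite mulmxA -colE !mxE => ->.
by [] || rewrite mxE.
Qed.

Lemma adj1 n : adj (1%:M : 'M[C]_n) = 1%:M.
Proof. by apply/matrixP => i j; rewrite /adj !mxE rmorph_nat eq_sym. Qed.
End Herm.

Theorem corollary1 (C : numClosedFieldType) (L : nat) (d : site L -> nat)
    (G PA : {set site L} -> opH C d) (P : opH C d) (c : C) (Lstar : nat) :
  standing_assumptions G PA P ->
  0 < c -> c * L%:R <= Lstar%:R ->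
  TQO2 PA P Lstar ->
  forall (r : nat) (a : site L) (O : opH C d),
    (1 <= r <= Lstar)%N ->
    acts_on (block L a.1 a.2 r) O ->
    O *m P = 0 ->
    O *m PB PA (nbhd_block L a.1 a.2 r) = 0.
Proof.
move=> [_ [Gc [Gpsd [_ [HPA [HP _]]]]]] _ _ TQ r a O hr [o Ho] OP.
set A := block L a.1 a.2 r.
set Bs := nbhd_block L a.1 a.2 r.
have SK := TQ r a hr; rewrite -/A -/Bs in SK.
have PAG : forall A1 A2, A1 \in squares L 2 -> A2 \in squares L 2 ->
    PA A1 *m G A2 = G A2 *m PA A1.
  move=> A1 A2 h1 h2; apply: (comm_pres (HPA A1 h1)); first exact: psd_herm (Gpsd A2 h2).
  by move=> v hv; rewrite mulmxA (Gc _ _ h1 h2) -mulmxA hv mulmx0.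
have PAPA : forall A1 A2, A1 \in squares L 2 -> A2 \in squares L 2 ->
    PA A2 *m PA A1 = PA A1 *m PA A2.
  move=> A1 A2 h1 h2; apply: (comm_pres (HPA A2 h2)); first exact: proj_adj (HPA A1 h1).
  by move=> v hv; rewrite mulmxA -(PAG _ _ h1 h2) -mulmxA hv mulmx0.
have [PBh PBi] : adj (PB PA Bs) = PB PA Bs /\ PB PA Bs *m PB PA Bs = PB PA Bs.
  suff : [/\ adj (PB PA Bs) = PB PA Bs, PB PA Bs *m PB PA Bs = PB PA Bs &
      forall A', A' \in squares L 2 -> PA A' *m PB PA Bs = PB PA Bs *m PA A'].
    by case.
  rewrite /PB; apply: (big_rec (fun X : opH C d => [/\ adj X = X, X *m X = X &
      forall A', A' \in squares L 2 -> PA A' *m X = X *m PA A'])).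
    by split; [exact: adj1 | rewrite mul1mx | move=> A' _; rewrite mul1mx mulmx1].
  move=> A1 X /andP[h1 _] [hX1 hX2 hX3]; split.
  - by rewrite adj_mul hX1 (proj_adj (HPA A1 h1)) hX3.
  - by rewrite mulmxA -(mulmxA _ X) -hX3 // mulmxA; case: (HPA A1 h1) => -> _ _; rewrite -mulmxA hX2.
  - move=> A' h'; rewrite mulmxA (PAPA _ _ h1 h') -!mulmxA hX3 //.
have Hrho : o *m ptrace A P = 0 by rewrite -(pt_mull _ Ho) OP pt0.
have Hrho' : ptrace A P *m adj o = 0.
  have := congr1 (@adj C _ _) Hrho; rewrite adj_mul -pt_adj (proj_adj HP) adj0.
  by [].
have Hsig := mx_kernel SK Hrho'.
have Hz : ptrace A ((O *m PB PA Bs) *m adj O) = 0.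
  by rewrite (pt_mulr _ Ho) (pt_mull _ Ho) -mulmxA Hsig mulmx0.
apply: pt_XX; rewrite adj_mul PBh mulmxA -(mulmxA O) PBi; exact: Hz.
Qed.
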